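(* Let $\alpha>0$, and let $N^\pm(\alpha)$, $\sigma$ be as in the context. Let $N:\mathbb R\to\mathbb R$ be the $\alpha$-periodic function with $N(t)=N^+(\alpha)e^{-t}$ for $t\in(0,\alpha)$, and define, for $s\ge0$, $t\in\mathbb R$, $$n(s,t)=N(t-s)\exp\Big(-\int_0^s\mathbf 1_{\{u>\sigma(N(t-s+u))\}}\,du\Big),$$ the periodic solution of $\partial_t n+\partial_s n+\mathbf 1_{\{s>\sigma(N(t))\}}n=0$, $n(0,t)=N(t)$. Then for every $t\in\mathbb R$ at which $N$ is continuous, $$N(t)=\int_{\sigma(N(t))}^\infty n(s,t)\,ds\qquad\text{and}\qquad\int_0^\infty n(s,t)\,ds=1,$$ i.e. $(n,N)$ is a periodic solution of the nonlinear model with $p(s,x)=\mathbf 1_{\{s>\sigma(x)\}}$.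
   Context: For $\alpha>0$: $N^-(\alpha)=\frac1{2e^\alpha-1}$, $N^+(\alpha)=\frac{e^\alpha}{2e^\alpha-1}$ (so $0<N^-<N^+<1$), and $\sigma(x)=2\alpha$ for $x\in[0,N^-(\alpha)]$, $\sigma(x)=2\alpha-\ln x+\ln N^-(\alpha)$ for $x\in[N^-(\alpha),N^+(\alpha)]$, $\sigma(x)=\alpha$ for $x\ge N^+(\alpha)$. *)

(* Defs.v *)
From Stdlib Require Import Reals Lra ClassicalEpsilon.
Open Scope R_scope.

Definition Nminus (a : R) : R := 1 / (2 * exp a - 1).
Definition Nplus (a : R) : R := exp a / (2 * exp a - 1).

(* sigma(x) = 2a on [0,N^-], 2a - ln x + ln N^- on [N^-,N^+], a on [N^+,oo).
   (Values for x < 0 are irrelevant; we extend by 2a.) *)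
Definition sigmaA (a x : R) : R :=
  if Rle_dec x (Nminus a) then 2 * a
  else if Rle_dec x (Nplus a) then 2 * a - ln x + ln (Nminus a)
  else a.

(* Total Riemann integral: the value of RiemannInt when f is Riemann
   integrable on [a,b] (RiemannInt is proof-irrelevant), arbitrary otherwise. *)
Definition Rint (f : R -> R) (a b : R) : R :=
  epsilon (inhabits 0)
    (fun v => forall pr : Riemann_integrable f a b, RiemannInt pr = v).

Definition improper_integral_eq (f : R -> R) (a l : R) : Prop :=
  (forall b, a <= b -> inhabited (Riemann_integrable f a b)) /\
  (forall eps, 0 < eps -> exists M, forall b, M <= b -> a <= b ->
      Rabs (Rint f a b - l) < eps).

Definition inner_ind (a : R) (N : R -> R) (s t : R) (u : R) : R :=
  if Rlt_dec (sigmaA a (N (t - s + u))) u then 1 else 0.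

Definition nsol (a : R) (N : R -> R) (s t : R) : R :=
  N (t - s) * exp (- Rint (inner_ind a N s t) 0 s).

(* Main.v *)
From Stdlib Require Import Reals Lra Lia ZArith ClassicalEpsilon.
From Coquelicot Require Import Coquelicot.
Require Import Defs.
Open Scope R_scope.



Lemma Rint_of_is (f : R -> R) a b v : is_RInt f a b v -> Rint f a b = v.
Proof.
  intros H.
  assert (Hex : ex_RInt f a b) by (eexists; eauto).
  pose proof (ex_RInt_Reals_0 _ _ _ Hex) as pr0.
  unfold Rint.
  assert (E : exists v, forall pr : Riemann_integrable f a b, RiemannInt pr = v).
  { exists (RiemannInt pr0). intros pr. apply RiemannInt_P5. }
  pose proof (epsilon_spec (inhabits 0) _ E) as Hs.
  rewrite <- (Hs pr0), <- RInt_Reals. now apply is_RInt_unique.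
Qed.

Lemma lattice_ind (al p : R) (P : R -> R -> Prop) : 0 < al ->
  (forall a c b, a <= c <= b -> P a c -> P c b -> P a b) ->
  (forall (m : Z) a b, p + IZR m * al <= a <= b -> b <= p + (IZR m + 1) * al -> P a b) ->
  forall a b, a <= b -> P a b.
Proof.
  intros Hal Hch Hb.
  assert (K : forall n (m : Z) a b, p + IZR m * al <= a <= b ->
             b <= p + (IZR m + INR n) * al -> P a b).
  { induction n as [|n IH]; intros m a b H1 H2.
    - apply (Hb m); [lra|]. change (INR 0) with 0 in H2. nra.
    - rewrite S_INR in H2.
      destruct (Rle_dec b (p + (IZR m + 1) * al)) as [Hle|Hlt].
      + apply (Hb m); lra.
      + destruct (Rle_dec a (p + (IZR m + 1) * al)) as [Ha|Ha].
        2:{ apply (IH (m+1)%Z); rewrite plus_IZR; nra. }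
        apply (Hch a (p + (IZR m + 1) * al) b).
        * nra.
        * apply (Hb m); nra.
        * apply (IH (m+1)%Z); rewrite plus_IZR; nra. }
  intros a b Hab.
  set (m := (up ((a - p) / al) - 1)%Z).
  destruct (archimed ((a - p) / al)) as [A1 A2].
  assert (Hm : IZR m * al <= a - p).
  { unfold m. rewrite minus_IZR.
    assert (IZR (up ((a - p) / al)) - 1 <= (a - p) / al) by lra.
    apply Rmult_le_compat_r with (r := al) in H; [|lra].
    assert (HA : (a - p) / al * al = a - p) by (field; lra). lra. }
  destruct (archimed ((b - p) / al)) as [B1 B2].
  set (n := Z.to_nat (up ((b - p) / al) - m)).
  apply (K n m); [lra|].
  assert (Hn : IZR (up ((b - p) / al)) - IZR m <= INR n).
  { unfold n. rewrite <- minus_IZR.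
    destruct (Z_le_gt_dec 0 (up ((b - p) / al) - m)) as [Hz|Hz].
    - rewrite INR_IZR_INZ, Z2Nat.id; [apply Rle_refl|lia].
    - apply Rle_trans with 0; [apply IZR_le; lia | apply pos_INR]. }
  assert (HB : (b - p) / al * al = b - p) by (field; lra).
  nra.
Qed.

Lemma Nminus_pos a : 0 < a -> 0 < Nminus a.
Proof.
  intros ha. unfold Nminus. pose proof (exp_ineq1 a ltac:(lra)).
  apply Rdiv_lt_0_compat; lra.
Qed.

Lemma Nplus_eq a : Nplus a = exp a * Nminus a.
Proof. unfold Nplus, Nminus. unfold Rdiv. ring. Qed.

Lemma Nper_Z a (N : R -> R) : (forall x, N (x + a) = N x) ->
  forall (m : Z) x, N (x + IZR m * a) = N x.
Proof.
  intros Nper.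
  assert (Hn : forall n x, N (x + INR n * a) = N x).
  { induction n as [|n IH]; intros x.
    - simpl. f_equal. ring.
    - rewrite S_INR. replace (x + (INR n + 1) * a) with ((x + INR n * a) + a) by ring.
      rewrite Nper. apply IH. }
  intros m x. destruct (Z_le_gt_dec 0 m) as [Hm|Hm].
  - rewrite <- (Z2Nat.id m) by lia. rewrite <- INR_IZR_INZ. apply Hn.
  - replace m with (- Z.of_nat (Z.to_nat (- m)))%Z by lia.
    rewrite opp_IZR, <- INR_IZR_INZ.
    rewrite <- (Hn (Z.to_nat (-m)) (x + - INR (Z.to_nat (- m)) * a)).
    f_equal. ring.
Qed.

Lemma Nval a (N : R -> R) (ha : 0 < a) (Nper : forall x, N (x + a) = N x)
  (Nform : forall x, 0 < x < a -> N x = Nplus a * exp (- x)) :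
  forall (m : Z) x, IZR m * a < x < (IZR m + 1) * a ->
  N x = Nplus a * exp (- (x - IZR m * a)).
Proof.
  intros m x H. pose proof (Nper_Z a N Nper m (x - IZR m * a)) as E.
  replace (x - IZR m * a + IZR m * a) with x in E by ring. rewrite E. apply Nform. lra.
Qed.

Lemma sigval a (N : R -> R) (ha : 0 < a) (Nper : forall x, N (x + a) = N x)
  (Nform : forall x, 0 < x < a -> N x = Nplus a * exp (- x)) :
  forall (m : Z) x, IZR m * a < x < (IZR m + 1) * a ->
  sigmaA a (N x) = a + (x - IZR m * a).
Proof.
  intros m x H. rewrite (Nval a N ha Nper Nform m x H).
  set (tau := x - IZR m * a).
  assert (Ht : 0 < tau < a) by (unfold tau; lra).
  pose proof (Nminus_pos a ha) as Hm.
  rewrite Nplus_eq.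
  assert (E1 : exp (- tau) < 1) by (rewrite <- exp_0; apply exp_increasing; lra).
  assert (E2 : exp a * exp (- tau) > 1).
  { rewrite <- exp_plus, <- exp_0. apply exp_increasing. lra. }
  pose proof (exp_pos a). pose proof (exp_pos (-tau)).
  unfold sigmaA. rewrite Nplus_eq.
  destruct (Rle_dec (exp a * Nminus a * exp (- tau)) (Nminus a)) as [C|C].
  { exfalso. nra. }
  destruct (Rle_dec (exp a * Nminus a * exp (- tau)) (exp a * Nminus a)) as [D|D].
  2:{ exfalso. apply D. nra. }
  rewrite (ln_mult (exp a * Nminus a)) by nra. rewrite (ln_mult (exp a)) by lra.
  rewrite !ln_exp. ring.
Qed.

Lemma is_RInt_c c x y : is_RInt (fun _ => c) x y ((y-x)*c).
Proof. exact (is_RInt_const x y c). Qed.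
Lemma plusR (x y : R) : plus x y = x + y. Proof. reflexivity. Qed.
Lemma minusR (x y : R) : minus x y = x - y. Proof. reflexivity. Qed.
Lemma ChaslesR (f : R -> R) x c y l1 l2 : is_RInt f x c l1 -> is_RInt f c y l2 ->
  is_RInt f x y (l1 + l2).
Proof. intros H1 H2. exact (is_RInt_Chasles f x c y l1 l2 H1 H2). Qed.

Lemma ind_piece a (N : R -> R) (ha : 0 < a) (Nper : forall x, N (x + a) = N x)
  (Nform : forall x, 0 < x < a -> N x = Nplus a * exp (- x)) s t u (m : Z) :
  IZR m * a < t - s + u < (IZR m + 1) * a ->
  inner_ind a N s t u = if Rlt_dec (a + t - s - IZR m * a) 0 then 1 else 0.
Proof.
  intros H. unfold inner_ind. rewrite (sigval a N ha Nper Nform m _ H).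
  destruct (Rlt_dec (a + (t - s + u - IZR m * a)) u);
  destruct (Rlt_dec (a + t - s - IZR m * a) 0); lra.
Qed.

Lemma inner_integrable a (N : R -> R) (ha : 0 < a) (Nper : forall x, N (x + a) = N x)
  (Nform : forall x, 0 < x < a -> N x = Nplus a * exp (- x)) s t :
  forall x y, x <= y -> ex_RInt (inner_ind a N s t) x y.
Proof.
  apply (lattice_ind a (s - t)); auto.
  - intros x c y _ H1 H2. eapply ex_RInt_Chasles; eauto.
  - intros m x y H1 H2.
    apply (ex_RInt_ext (fun _ => if Rlt_dec (a + t - s - IZR m * a) 0 then 1 else 0)).
    + intros u Hu. rewrite Rmin_left, Rmax_right in Hu by lra.
      symmetry. apply (ind_piece a N ha Nper Nform s t u m). nra.
    + eexists. apply is_RInt_c.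
Qed.

Lemma inner_zero a (N : R -> R) (ha : 0 < a) (Nper : forall x, N (x + a) = N x)
  (Nform : forall x, 0 < x < a -> N x = Nplus a * exp (- x)) s t (q : Z) b w :
  0 < b < a -> t - s = IZR q * a + b -> w <= 2 * a - b ->
  forall x y, x <= y -> x <= y -> y <= w -> is_RInt (inner_ind a N s t) x y 0.
Proof.
  intros Hb Hq Hw x y Hxy.
  revert x y Hxy.
  apply (lattice_ind a (s - t) (fun x y => x <= y -> y <= w -> is_RInt (inner_ind a N s t) x y 0)); auto.
  - intros x c y H0 H1 H2 _ Hy. replace 0 with (0 + 0) by ring.
    eapply ChaslesR; [apply H1|apply H2]; lra.
  - intros m x y H1 H2 _ Hy.
    destruct (Req_dec x y) as [E|E].
    { subst y. replace 0 with ((x - x) * 0) by ring. apply (is_RInt_ext (fun _ => 0)).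
      - intros u Hu. rewrite Rmin_left, Rmax_right in Hu by lra. lra.
      - apply is_RInt_c. }
    assert (Hm : (IZR m - IZR q) * a < 2 * a) by nra.
    assert (Hmq : (m - q <= 1)%Z).
    { destruct (Z_le_gt_dec (m - q) 1) as [?|G]; auto.
      assert (IZR (m - q) >= 2) by (apply Rle_ge, IZR_le; lia).
      rewrite minus_IZR in H. nra. }
    apply IZR_le in Hmq. rewrite minus_IZR in Hmq.
    replace 0 with ((y - x) * 0) by ring.
    apply (is_RInt_ext (fun _ => 0)); [|apply is_RInt_c].
    intros u Hu. rewrite Rmin_left, Rmax_right in Hu by lra.
    rewrite (ind_piece a N ha Nper Nform s t u m) by nra.
    destruct (Rlt_dec (a + t - s - IZR m * a) 0); [|reflexivity].
    exfalso. nra.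
Qed.

Lemma inner_one a (N : R -> R) (ha : 0 < a) (Nper : forall x, N (x + a) = N x)
  (Nform : forall x, 0 < x < a -> N x = Nplus a * exp (- x)) s t (q : Z) b :
  0 < b < a -> t - s = IZR q * a + b ->
  forall x y, x <= y -> 2 * a - b <= x -> is_RInt (inner_ind a N s t) x y (y - x).
Proof.
  intros Hb Hq x y Hxy.
  revert x y Hxy.
  apply (lattice_ind a (s - t) (fun x y => 2 * a - b <= x -> is_RInt (inner_ind a N s t) x y (y - x))); auto.
  - intros x c y H0 H1 H2 Hx. replace (y - x) with ((c - x) + (y - c)) by ring.
    eapply ChaslesR; [apply H1|apply H2]; lra.
  - intros m x y H1 H2 Hx.
    destruct (Req_dec x y) as [E|E].
    { subst y. replace (x - x) with ((x - x) * 0) by ring. apply (is_RInt_ext (fun _ => 0)).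
      - intros u Hu. rewrite Rmin_left, Rmax_right in Hu by lra. lra.
      - apply is_RInt_c. }
    assert (Hm : 2 * a < (IZR m + 1 - IZR q) * a) by nra.
    assert (Hmq : (2 <= m - q)%Z).
    { destruct (Z_le_gt_dec 2 (m - q)) as [?|G]; auto.
      assert (IZR (m - q) <= 1) by (apply IZR_le; lia).
      rewrite minus_IZR in H. nra. }
    apply IZR_le in Hmq. rewrite minus_IZR in Hmq.
    replace (y - x) with ((y - x) * 1) by ring.
    apply (is_RInt_ext (fun _ => 1)); [|apply is_RInt_c].
    intros u Hu. rewrite Rmin_left, Rmax_right in Hu by lra.
    rewrite (ind_piece a N ha Nper Nform s t u m) by nra.
    destruct (Rlt_dec (a + t - s - IZR m * a) 0); [reflexivity|].
    exfalso. nra.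
Qed.

Lemma inner_val a (N : R -> R) (ha : 0 < a) (Nper : forall x, N (x + a) = N x)
  (Nform : forall x, 0 < x < a -> N x = Nplus a * exp (- x)) s t (q : Z) b :
  0 < b < a -> t - s = IZR q * a + b -> 0 <= s ->
  Rint (inner_ind a N s t) 0 s = Rmax 0 (s - 2 * a + b).
Proof.
  intros Hb Hq Hs. apply Rint_of_is.
  destruct (Rle_dec s (2 * a - b)) as [H|H].
  - rewrite Rmax_left by lra. apply (inner_zero a N ha Nper Nform s t q b s); lra.
  - rewrite Rmax_right by lra.
    replace (s - 2 * a + b) with (0 + (s - (2 * a - b))) by ring.
    apply ChaslesR with (c := 2 * a - b).
    + apply (inner_zero a N ha Nper Nform s t q b (2 * a - b)); lra.
    + apply (inner_one a N ha Nper Nform s t q b); lra.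
Qed.

Lemma exists_nat_ge r : exists n : nat, r <= INR n.
Proof.
  destruct (archimed r) as [H1 H2].
  exists (Z.to_nat (up r)).
  destruct (Z_le_gt_dec 0 (up r)).
  - rewrite INR_IZR_INZ, Z2Nat.id by lia. lra.
  - assert (IZR (up r) <= 0) by (apply IZR_le; lia). pose proof (pos_INR (Z.to_nat (up r))). lra.
Qed.

Lemma uniqR (f : R -> R) x y v1 v2 : is_RInt f x y v1 -> is_RInt f x y v2 -> v1 = v2.
Proof.
  intros H1 H2. transitivity (RInt f x y).
  - symmetry. apply is_RInt_unique. exact H1.
  - apply is_RInt_unique. exact H2.
Qed.

Lemma improper_from a (f : R -> R) c p L C : 0 < a -> c <= p -> 0 <= C ->
  (forall x y, c <= x <= y -> exists v, 0 <= v /\ is_RInt f x y v) ->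
  (forall n : nat, is_RInt f c (p + INR n * a) (L - C * exp (- (INR n * a)))) ->
  improper_integral_eq f c L.
Proof.
  intros ha hcp hC Hpos Hn. split.
  - intros y Hy. destruct (Hpos c y) as [v [_ Hv]]; [lra|].
    constructor. apply ex_RInt_Reals_0. eexists; eauto.
  - intros eps Heps.
    destruct (exists_nat_ge (C / (eps * a))) as [n Hn0].
    exists (p + INR (S n) * a). intros y Hy Hcy.
    destruct (Hpos c y) as [V [HV0 HV]]; [lra|].
    rewrite (Rint_of_is _ _ _ _ HV).
    destruct (Hpos (p + INR (S n) * a) y) as [w [Hw0 Hw]].
    { pose proof (pos_INR (S n)). nra. }
    pose proof (uniqR _ _ _ _ _ HV (ChaslesR _ _ _ _ _ _ (Hn (S n)) Hw)) as Ev.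
    destruct (exists_nat_ge ((y - p) / a)) as [n' Hn'].
    assert (Hyn' : y <= p + INR n' * a).
    { apply Rmult_le_compat_r with (r := a) in Hn'; [|lra].
      replace ((y - p) / a * a) with (y - p) in Hn' by (field; lra). lra. }
    destruct (Hpos y (p + INR n' * a)) as [w' [Hw'0 Hw']]; [lra|].
    pose proof (uniqR _ _ _ _ _ (Hn n') (ChaslesR _ _ _ _ _ _ HV Hw')) as E2.
    pose proof (exp_pos (- (INR n' * a))).
    assert (Hs : C * exp (- (INR (S n) * a)) < eps).
    { rewrite S_INR. set (z := (INR n + 1) * a).
      assert (Hz : 0 < z) by (unfold z; pose proof (pos_INR n); nra).
      pose proof (exp_ineq1 z ltac:(lra)).
      rewrite exp_Ropp.
      assert (Hc : C <= eps * a * INR n).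
      { apply Rmult_le_compat_l with (r := eps * a) in Hn0; [|nra].
        replace (eps * a * (C / (eps * a))) with C in Hn0 by (field; lra). lra. }
      pose proof (exp_pos z).
      apply Rmult_lt_reg_r with (r := exp z); [lra|].
      rewrite Rmult_assoc, Rinv_l by lra. unfold z in *. nra. }
    apply Rabs_def1; nra.
Qed.

Definition Gp a th (m : Z) s :=
  Nplus a * exp (- (th + (IZR m + 1) * a - s)) * exp (- Rmax 0 (th + (IZR m - 1) * a)).

Lemma G_int a th m x y : is_RInt (Gp a th m) x y (Gp a th m y - Gp a th m x).
Proof.
  apply (is_RInt_derive (Gp a th m) (Gp a th m)).
  - intros s _. unfold Gp. auto_derive; [exact I|]. replace (- - (1)) with 1 by ring. rewrite Rmult_1_l. reflexivity.
  - intros s _. apply (@ex_derive_continuous R_AbsRing R_NormedModule). unfold Gp. auto_derive. exact I.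
Qed.

Lemma nsol_piece a (N : R -> R) (ha : 0 < a) (Nper : forall x, N (x + a) = N x)
  (Nform : forall x, 0 < x < a -> N x = Nplus a * exp (- x)) t (k : Z) th (m : Z) s :
  t = IZR k * a + th -> 0 < th < a -> 0 <= s ->
  th + IZR m * a < s < th + (IZR m + 1) * a -> nsol a N s t = Gp a th m s.
Proof.
  intros Ht Hth Hs Hm. unfold nsol, Gp.
  set (q := (k - m - 1)%Z).
  assert (Hq : IZR q = IZR k - IZR m - 1) by (unfold q; rewrite !minus_IZR; ring).
  rewrite (Nval a N ha Nper Nform q) by (rewrite Hq; nra).
  rewrite (inner_val a N ha Nper Nform s t q (th + (IZR m + 1) * a - s)); try lra.
  2:{ rewrite Hq. rewrite Ht. ring. }
  replace (t - s - IZR q * a) with (th + (IZR m + 1) * a - s) by (rewrite Hq, Ht; ring).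
  replace (s - 2 * a + (th + (IZR m + 1) * a - s)) with (th + (IZR m - 1) * a) by ring.
  reflexivity.
Qed.

Lemma Nplus_pos a : 0 < a -> 0 < Nplus a.
Proof. intros. rewrite Nplus_eq. pose proof (exp_pos a). pose proof (Nminus_pos a H). nra. Qed.

Lemma Gp_mono a th m x y : 0 < a -> x <= y -> Gp a th m x <= Gp a th m y.
Proof.
  intros ha H. unfold Gp. pose proof (Nplus_pos a ha).
  pose proof (exp_pos (- Rmax 0 (th + (IZR m - 1) * a))).
  apply Rmult_le_compat_r; [lra|]. apply Rmult_le_compat_l; [lra|].
  destruct (Req_dec x y) as [E|E]; [subst; lra|].
  left. apply exp_increasing. lra.
Qed.

Lemma nsol_pieceI a (N : R -> R) (ha : 0 < a) (Nper : forall x, N (x + a) = N x)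
  (Nform : forall x, 0 < x < a -> N x = Nplus a * exp (- x)) t (k : Z) th (m : Z) x y :
  t = IZR k * a + th -> 0 < th < a -> 0 <= x ->
  th + IZR m * a <= x <= y -> y <= th + (IZR m + 1) * a ->
  is_RInt (fun s => nsol a N s t) x y (Gp a th m y - Gp a th m x).
Proof.
  intros Ht Hth Hx H1 H2.
  apply (is_RInt_ext (Gp a th m)); [|apply G_int].
  intros s Hs. rewrite Rmin_left, Rmax_right in Hs by lra.
  symmetry. apply (nsol_piece a N ha Nper Nform t k th m s); lra.
Qed.

Lemma nsol_pos a (N : R -> R) (ha : 0 < a) (Nper : forall x, N (x + a) = N x)
  (Nform : forall x, 0 < x < a -> N x = Nplus a * exp (- x)) t (k : Z) th :
  t = IZR k * a + th -> 0 < th < a ->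
  forall x y, 0 <= x <= y -> exists v, 0 <= v /\ is_RInt (fun s => nsol a N s t) x y v.
Proof.
  intros Ht Hth x y Hxy.
  revert x y Hxy.
  assert (K : forall x y, x <= y -> 0 <= x -> exists v, 0 <= v /\ is_RInt (fun s => nsol a N s t) x y v).
  { apply (lattice_ind a th (fun x y => 0 <= x -> exists v, 0 <= v /\ is_RInt (fun s => nsol a N s t) x y v)); auto.
    - intros x c y H0 H1 H2 Hx. destruct (H1 Hx) as [v1 [P1 I1]].
      destruct (H2 ltac:(lra)) as [v2 [P2 I2]].
      exists (v1 + v2). split; [lra|]. eapply ChaslesR; eauto.
    - intros m x y H1 H2 Hx. exists (Gp a th m y - Gp a th m x). split.
      + pose proof (Gp_mono a th m x y ha (proj2 H1)). lra.
      + apply (nsol_pieceI a N ha Nper Nform t k th m); lra. }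
  intros x y H. apply K; lra.
Qed.

Lemma exp_split x y : exp (- (x + y)) = exp (- x) * exp (- y).
Proof. rewrite <- exp_plus. f_equal. ring. Qed.

Lemma S2 a (N : R -> R) (ha : 0 < a) (Nper : forall x, N (x + a) = N x)
  (Nform : forall x, 0 < x < a -> N x = Nplus a * exp (- x)) t (k : Z) th :
  t = IZR k * a + th -> 0 < th < a ->
  forall n : nat, is_RInt (fun s => nsol a N s t) (th + a) (th + a + INR n * a)
    (Nplus a * exp (- th) - Nplus a * exp (- th) * exp (- (INR n * a))).
Proof.
  intros Ht Hth n. induction n as [|n IH].
  - change (INR 0) with 0. rewrite Rmult_0_l, Ropp_0, exp_0, Rplus_0_r.
    replace (Nplus a * exp (- th) - Nplus a * exp (- th) * 1) with
      (Gp a th 1 (th + a) - Gp a th 1 (th + a)) by ring.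
    apply (nsol_pieceI a N ha Nper Nform t k th 1); lra.
  - set (m := (Z.of_nat n + 1)%Z).
    assert (Hm : IZR m = INR n + 1) by (unfold m; rewrite plus_IZR, <- INR_IZR_INZ; ring).
    pose proof (pos_INR n).
    assert (P : is_RInt (fun s => nsol a N s t) (th + a + INR n * a) (th + a + INR (S n) * a)
       (Gp a th m (th + a + INR (S n) * a) - Gp a th m (th + a + INR n * a))).
    { apply (nsol_pieceI a N ha Nper Nform t k th m); rewrite ?Hm, ?S_INR; nra. }
    pose proof (ChaslesR _ _ _ _ _ _ IH P) as C.
    match goal with |- is_RInt _ _ _ ?T => replace T with
      ((Nplus a * exp (- th) - Nplus a * exp (- th) * exp (- (INR n * a))) +
       (Gp a th m (th + a + INR (S n) * a) - Gp a th m (th + a + INR n * a))); [exact C|] end.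
    unfold Gp. rewrite Hm, S_INR. rewrite Rmax_right by nra.
    assert (E1 : exp (- (th + (INR n + 1 + 1) * a - (th + a + (INR n + 1) * a))) = 1)
      by (transitivity (exp 0); [f_equal; ring | apply exp_0]).
    assert (E2 : exp (- (th + (INR n + 1 + 1) * a - (th + a + INR n * a))) = exp (- a))
      by (f_equal; ring).
    assert (E3 : exp (- (th + (INR n + 1 - 1) * a)) = exp (- th) * exp (- (INR n * a)))
      by (rewrite <- exp_split; f_equal; ring).
    assert (E4 : exp (- ((INR n + 1) * a)) = exp (- (INR n * a)) * exp (- a))
      by (rewrite <- exp_split; f_equal; ring).
    rewrite E1, E2, E3, E4. ring.
Qed.

Lemma S3 a (N : R -> R) (ha : 0 < a) (Nper : forall x, N (x + a) = N x)
  (Nform : forall x, 0 < x < a -> N x = Nplus a * exp (- x)) t (k : Z) th :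
  t = IZR k * a + th -> 0 < th < a ->
  forall n : nat, is_RInt (fun s => nsol a N s t) 0 (th + a + INR n * a)
    (1 - Nplus a * exp (- th) * exp (- (INR n * a))).
Proof.
  intros Ht Hth n.
  pose proof (nsol_pieceI a N ha Nper Nform t k th (-1) 0 th Ht Hth) as P1.
  pose proof (nsol_pieceI a N ha Nper Nform t k th 0 th (th + a) Ht Hth) as P2.
  pose proof (S2 a N ha Nper Nform t k th Ht Hth n) as P3.
  assert (C := ChaslesR _ _ _ _ _ _ (ChaslesR _ _ _ _ _ _ (P1 ltac:(lra) ltac:(simpl; lra) ltac:(simpl; lra))
     (P2 ltac:(lra) ltac:(simpl; lra) ltac:(simpl; lra))) P3).
  match goal with |- is_RInt _ _ _ ?T => replace T with (
    Gp a th (-1) th - Gp a th (-1) 0 + (Gp a th 0 (th + a) - Gp a th 0 th) +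
     (Nplus a * exp (- th) - Nplus a * exp (- th) * exp (- (INR n * a)))); [exact C|] end.
  unfold Gp. simpl IZR.
  rewrite (Rmax_left 0 (th + (-1 - 1) * a)) by lra.
  rewrite (Rmax_left 0 (th + (0 - 1) * a)) by lra.
  assert (E1 : exp (- (th + (-1 + 1) * a - th)) = 1)
      by (transitivity (exp 0); [f_equal; ring | apply exp_0]).
  assert (E2 : exp (- (th + (-1 + 1) * a - 0)) = exp (- th)) by (f_equal; ring).
  assert (E3 : exp (- (th + (0 + 1) * a - (th + a))) = 1)
      by (transitivity (exp 0); [f_equal; ring | apply exp_0]).
  assert (E4 : exp (- (th + (0 + 1) * a - th)) = exp (- a)) by (f_equal; ring).
  rewrite E1, E2, E3, E4, Ropp_0, exp_0.
  unfold Nplus. rewrite (exp_Ropp a). pose proof (exp_pos a). pose proof (exp_ineq1 a ltac:(lra)).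
  pose proof (exp_pos th). field. lra.
Qed.

Lemma expLe x y : x <= y -> exp x <= exp y.
Proof. intros H. destruct (Req_dec x y); [subst; lra|]. left; apply exp_increasing; lra. Qed.

Lemma disc a (N : R -> R) (ha : 0 < a) (Nper : forall x, N (x + a) = N x)
  (Nform : forall x, 0 < x < a -> N x = Nplus a * exp (- x)) (k : Z) :
  continuity_pt N (IZR k * a) -> False.
Proof.
  intros Hc. set (t := IZR k * a) in *.
  pose proof (Nplus_pos a ha) as HP.
  assert (Hd : exp (- (3 * a / 4)) < exp (- (a / 4))) by (apply exp_increasing; lra).
  set (eps := Nplus a * (exp (- (a / 4)) - exp (- (3 * a / 4))) / 2).
  assert (He : 0 < eps) by (unfold eps; nra).
  destruct (Hc eps He) as [alp [Halp H]].
  set (h := Rmin (alp / 2) (a / 4)).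
  assert (Hh : 0 < h <= a / 4 /\ h < alp).
  { unfold h. split; [split|].
    - apply Rmin_glb_lt; lra.
    - apply Rmin_r.
    - pose proof (Rmin_l (alp / 2) (a / 4)). lra. }
  assert (H1 := H (t + h)). assert (H2 := H (t - h)).
  unfold D_x, no_cond, Rdist in H1, H2. simpl in H1, H2.
  assert (A1 : Rabs (N (t + h) - N t) < eps).
  { apply H1. split; [split; [exact I|lra]|].
    unfold Rdist. replace (t + h - t) with h by ring. rewrite Rabs_right; lra. }
  assert (A2 : Rabs (N (t - h) - N t) < eps).
  { apply H2. split; [split; [exact I|lra]|].
    unfold Rdist. replace (t - h - t) with (- h) by ring. rewrite Rabs_Ropp, Rabs_right; lra. }
  rewrite (Nval a N ha Nper Nform k) in A1 by (unfold t; lra).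
  rewrite (Nval a N ha Nper Nform (k - 1)) in A2 by (unfold t; rewrite minus_IZR; lra).
  replace (t + h - IZR k * a) with h in A1 by (unfold t; ring).
  replace (t - h - IZR (k - 1) * a) with (a - h) in A2 by (unfold t; rewrite minus_IZR; ring).
  apply Rabs_def2 in A1. apply Rabs_def2 in A2.
  assert (B1 : exp (- (a / 4)) <= exp (- h)) by (apply expLe; lra).
  assert (B2 : exp (- (a - h)) <= exp (- (3 * a / 4))) by (apply expLe; lra).
  unfold eps in *. nra.
Qed.

Theorem mainTheorem11 (a : R) (N : R -> R) (t : R)
  (ha : 0 < a)
  (Nper : forall x, N (x + a) = N x)
  (Nform : forall x, 0 < x < a -> N x = Nplus a * exp (- x))
  (Ncont : continuity_pt N t) :
  (forall s, 0 <= s -> inhabited (Riemann_integrable (inner_ind a N s t) 0 s)) /\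
  improper_integral_eq (fun s => nsol a N s t) (sigmaA a (N t)) (N t) /\
  improper_integral_eq (fun s => nsol a N s t) 0 1.
Proof.
  set (k := (up (t / a) - 1)%Z).
  set (th := t - IZR k * a).
  assert (Ht : t = IZR k * a + th) by (unfold th; ring).
  assert (Hth0 : 0 <= th < a).
  { destruct (archimed (t / a)) as [A1 A2].
    assert (Hk : IZR k = IZR (up (t / a)) - 1) by (unfold k; rewrite minus_IZR; ring).
    assert (E : t / a * a = t) by (field; lra).
    unfold th. rewrite Hk. nra. }
  assert (Hth : 0 < th < a).
  { split; [|lra]. destruct (Req_dec th 0) as [E|E]; [|lra].
    exfalso. apply (disc a N ha Nper Nform k). rewrite E, Rplus_0_r in Ht.
    rewrite <- Ht. exact Ncont. }
  pose proof (Nplus_pos a ha) as HP. pose proof (exp_pos (- th)) as HE.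
  split; [|split].
  - intros s Hs. constructor. apply ex_RInt_Reals_0.
    apply (inner_integrable a N ha Nper Nform); lra.
  - assert (Hs : sigmaA a (N t) = a + th).
    { rewrite (sigval a N ha Nper Nform k) by lra. unfold th. ring_simplify. reflexivity. }
    assert (Hn : N t = Nplus a * exp (- th)).
    { rewrite (Nval a N ha Nper Nform k) by lra. unfold th. reflexivity. }
    rewrite Hs, Hn.
    replace (a + th) with (th + a) by ring.
    apply (improper_from a _ (th + a) (th + a) _ (Nplus a * exp (- th))); auto; try lra; try nra.
    + intros x y Hxy. apply (nsol_pos a N ha Nper Nform t k th); lra.
    + intros n. apply (S2 a N ha Nper Nform t k th); lra.
  - apply (improper_from a _ 0 (th + a) _ (Nplus a * exp (- th))); auto; try lra; try nra.
    + intros x y Hxy. apply (nsol_pos a N ha Nper Nform t k th); lra.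
    + intros n. apply (S3 a N ha Nper Nform t k th); lra.
Qed.
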